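(* Let $n\geq 3$ and let $K_n$ be the complete graph on $n$ vertices. Then $\lim_{p\to\infty}\|M_{K_n}\|_p^p$ exists and $$\lim_{p\to\infty}\|M_{K_n}\|_p^p=\sup_{\alpha>1,\ k\in\{1,\dots,n\}}\frac{k\alpha^{n/k}+\alpha(n-k)}{k\alpha^{n/k}+n-k}.$$
   Context: For a finite connected graph $G=(V,E)$ with graph distance $d_G$ and $f:V\to\mathbb{R}$, $M_Gf(v)=\sup_{r\geq 0}\frac{1}{|B(v,r)|}\sum_{u\in B(v,r)}|f(u)|$, where $B(v,r)=\{u\in V: d_G(u,v)\le r\}$. For $g:V\to\mathbb{R}$, $\|g\|_p=(\sum_{v\in V}|g(v)|^p)^{1/p}$ and $\|M_G\|_p=\sup_{f\neq 0}\|M_Gf\|_p/\|f\|_p$. *)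

(* Defs.v *)
From HB Require Import structures.
From mathcomp Require Import all_boot all_order all_algebra.
From mathcomp Require Import all_classical all_reals all_analysis.
Set Implicit Arguments. Unset Strict Implicit. Unset Printing Implicit Defensive.
Import Order.TTheory GRing.Theory Num.Theory.
Local Open Scope classical_set_scope.
Local Open Scope ring_scope.

(* A finite graph is given by an edge relation [e : rel T] on a finType T.
   [walk_within e k u v] : there is a walk of length at most k from u to v,
   i.e. d_G(u,v) <= k for the graph distance d_G. *)
Fixpoint walk_within (T : finType) (e : rel T) (k : nat) (u v : T) : bool :=
  match k with
  | 0 => u == v
  | k'.+1 => walk_within e k' u v || [exists w, walk_within e k' u w && e w v]
  end.

Definition ball_G (R : realType) (T : finType) (e : rel T) (v : T) (r : R) : {set T} :=
  [set u | `[< exists k : nat, (k%:R <= r) /\ walk_within e k v u >]].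

Definition ball_avg (R : realType) (T : finType) (e : rel T) (f : T -> R) (v : T) (r : R) : R :=
  (#|ball_G e v r|%:R)^-1 * \sum_(u in ball_G e v r) `|f u|.

Definition maxop (R : realType) (T : finType) (e : rel T) (f : T -> R) (v : T) : R :=
  sup [set ball_avg e f v r | r in [set r : R | 0 <= r]].

Definition lpnorm (R : realType) (T : finType) (p : R) (g : T -> R) : R :=
  (\sum_(v : T) `|g v| `^ p) `^ p^-1.

Definition maxop_norm (R : realType) (T : finType) (e : rel T) (p : R) : R :=
  sup [set lpnorm p (maxop e f) / lpnorm p f | f in [set f : T -> R | f <> (fun _ => 0)]].

Definition complete_rel (n : nat) : rel 'I_n := fun x y => x != y.
Arguments complete_rel n : clear implicits.

(* Main.v *)
Require Import Defs.
From HB Require Import structures.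
From mathcomp Require Import all_boot all_order all_algebra.
From mathcomp Require Import all_classical all_reals all_analysis.
From mathcomp Require Import ring lra.
Import Order.TTheory GRing.Theory Num.Theory numFieldNormedType.Exports.
Local Open Scope classical_set_scope.
Local Open Scope ring_scope.
Set Implicit Arguments. Unset Strict Implicit. Unset Printing Implicit Defensive.

Lemma walkS (n : nat) k (u v : 'I_n) : walk_within (complete_rel n) k.+1 u v.
Proof.
elim: k => [|k IH].
  case: (eqVneq u v) => [->|uv]; first by rewrite /= eqxx.
  rewrite /=.
  apply/orP; right; apply/existsP; exists u; by rewrite eqxx /complete_rel uv.
by apply/orP; left.
Qed.

Lemma ballE (R : realType) n (v : 'I_n) (r : R) : 0 <= r ->
  ball_G (complete_rel n) v r = (if r < 1 then [set v] else [set: 'I_n])%SET.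
Proof.
move=> r0; apply/setP => u; rewrite inE; case: ifP => r1.
- rewrite inE; apply/asboolP/eqP.
  + case=> -[|k] [kr w]; first by move: w => /= /eqP ->.
    exfalso; move: kr; rewrite leNgt => /negP; apply.
    by apply: (lt_le_trans r1); rewrite ler1n.
  + by move=> ->; exists 0%N; split => //=.
- rewrite inE; apply/asboolP; exists 1%N; split; last exact: walkS.
  by rewrite leNgt r1.
Qed.

Definition avg (R : realType) n (f : 'I_n -> R) : R := (n%:R)^-1 * \sum_u `|f u|.

Lemma maxopE (R : realType) n (f : 'I_n -> R) v :
  maxop (complete_rel n) f v = Num.max `|f v| (avg f).
Proof.
rewrite /maxop.
set E := [set _ | _ in _].
have hE : forall x, E x -> x = `|f v| \/ x = avg f.
  move=> x [r /= r0 <-]; rewrite /ball_avg ballE //.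
  case: ifP => _; [left|right].
    by rewrite cards1 big_set1 invr1 mul1r.
  rewrite cardsT card_ord /avg; congr (_ * _).
  by apply: eq_bigl => u; rewrite inE.
have E0 : E `|f v| .
  exists 0 => //=; rewrite /ball_avg ballE // ltr01 cards1 big_set1 invr1 mul1r //.
have E1 : E (avg f).
  exists 1 => //=; rewrite /ball_avg ballE // ltxx cardsT card_ord /avg; congr (_ * _).
  by apply: eq_bigl => u; rewrite inE.
have ub : ubound E (Num.max `|f v| (avg f)).
  by move=> x /hE [->|->]; rewrite le_max lexx ?orbT.
apply/le_anti/andP; split.
  by apply: ge_sup => //; exists `|f v|.
have hs : has_sup E by split; [exists `|f v| | exists (Num.max `|f v| (avg f))].
by rewrite ge_max !sup_upper_bound.
Qed.

Lemma lpnorm_pow (R : realType) (T : finType) p (g : T -> R) : 0 < p ->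
  lpnorm p g `^ p = \sum_v `|g v| `^ p.
Proof.
move=> p0; rewrite /lpnorm -powRrM mulVf ?gt_eqF // powRr1 //.
by apply: sumr_ge0 => v _; exact: powR_ge0.
Qed.

Lemma sum_pos (R : realType) (T : finType) p (f : T -> R) :
  f <> (fun _ => 0) -> 0 < \sum_v `|f v| `^ p.
Proof.
move=> hf.
case: (pselect (exists v, f v != 0)) => [[v fv]|H]; last first.
  exfalso; apply: hf; apply: funext => v; apply/eqP; apply/negPn/negP => fv.
  by apply: H; exists v.
rewrite (bigD1 v) //=; apply: (@lt_le_trans _ _ (`|f v| `^ p)).
  by apply: powR_gt0; rewrite normr_gt0.
rewrite lerDl; by apply: sumr_ge0 => u _; exact: powR_ge0.
Qed.

Lemma ratio_pow (R : realType) (T : finType) p (f g : T -> R) : 0 < p ->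
  f <> (fun _ => 0) ->
  (lpnorm p g / lpnorm p f) `^ p = (\sum_v `|g v| `^ p) / (\sum_v `|f v| `^ p).
Proof.
move=> p0 hf.
have b0 : 0 < lpnorm p f by apply: powR_gt0; exact: sum_pos.
have a0 : 0 <= lpnorm p g by apply: powR_ge0.
have := @powRM _ (lpnorm p g / lpnorm p f) (lpnorm p f) p.
have e : lpnorm p g / lpnorm p f * lpnorm p f = lpnorm p g := divfK (lt0r_neq0 b0) _.
rewrite e => h.
have hb : 0 < lpnorm p f `^ p by apply: powR_gt0.
rewrite -(lpnorm_pow g p0) -(lpnorm_pow f p0) {1}h.
- rewrite mulfK; [by [] | exact: (lt0r_neq0 hb)].
- exact: (divr_ge0 a0 (ltW b0)).
- exact: (ltW b0).
Qed.

Lemma bern (R : realType) (z p : R) : 0 <= z -> 1 <= p -> 1 + p * (z - 1) <= z `^ p.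
Proof.
move=> z0 p1; have [->|pn1] := eqVneq p 1.
  by rewrite powRr1 // mul1r addrC subrK.
have p1' : 1 < p by rewrite lt_neqAle eq_sym pn1.
have p0 : 0 < p by apply: lt_trans p1'.
pose q := p / (p - 1).
have q0 : 0 < q by rewrite /q divr_gt0 // subr_gt0.
have pq : p^-1 + q^-1 = 1.
  rewrite /q invf_div mulrBl mulfV; last exact: lt0r_neq0 p0.
  by rewrite mul1r addrC subrK.
have := @conjugate_powR _ z 1 p q z0 ler01 p0 q0 pq.
rewrite mulr1 powR1 /q invf_div mul1r -mulrDl ler_pdivlMr // => h.
have pq' : p - 1 = p * 1 - 1 by rewrite mulr1.
lra.
Qed.

Lemma powmean (R : realType) (I : finType) (A : {set I}) (t : I -> R) p :
  1 <= p -> (forall i, 0 <= t i) ->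
  #|A|%:R * ((\sum_(i in A) t i) / #|A|%:R) `^ p <= \sum_(i in A) t i `^ p.
Proof.
move=> p1 t0; have p0 : 0 < p by apply: lt_le_trans p1.
have s0 : 0 <= \sum_(i in A) t i `^ p by apply: sumr_ge0 => i _; exact: powR_ge0.
set k := #|A|%:R; set mu := (\sum_(i in A) t i) / k.
have [k0|kn0] := eqVneq k 0; first by rewrite k0 mul0r.
have k0' : 0 < k by rewrite lt_neqAle eq_sym kn0 /k ler0n.
have mu0 : 0 <= mu by apply: divr_ge0; [apply: sumr_ge0 => i _; exact: t0|exact: ltW].
have [mu00|mun0] := eqVneq mu 0.
  by rewrite mu00 powR0 ?mulr0 //; exact: lt0r_neq0 p0.
have mup : 0 < mu by rewrite lt_neqAle eq_sym mun0 mu0.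
have h i : mu `^ p * (1 + p * (t i / mu - 1)) <= t i `^ p.
  have -> : t i `^ p = mu `^ p * (t i / mu) `^ p.
    rewrite -powRM; [|exact: ltW|apply: divr_ge0 => //; exact: ltW].
    by rewrite mulrC divfK //; exact: lt0r_neq0 mup.
  apply: ler_wpM2l; first exact: powR_ge0.
  apply: bern => //; apply: divr_ge0 => //; exact: ltW.
apply: le_trans (ler_sum _ (fun i _ => h i)).
rewrite -mulr_sumr mulrC; apply: ler_wpM2l; first exact: powR_ge0.
have -> : \sum_(i in A) (1 + p * (t i / mu - 1)) =
    (1 - p) *+ #|A| + p / mu * \sum_(i in A) t i.
  rewrite mulr_sumr -sumr_const -big_split /=; apply: eq_bigr => i _.
  ring.
have -> : \sum_(i in A) t i = mu * k by rewrite /mu divfK //; exact: lt0r_neq0 k0'.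
rewrite -/k mulrA divfK; last exact: lt0r_neq0 mup.
rewrite -mulr_natr -/k; lra.
Qed.

Lemma sum_splitT (R : realType) (I : finType) (T : {set I}) (F : I -> R) :
  \sum_v F v = \sum_(v in T) F v + \sum_(v in ~: T) F v.
Proof.
rewrite (bigID (fun v => v \in T)) /=; congr (_ + _).
by apply: eq_bigl => v; rewrite finset.in_setC.
Qed.

Lemma card_mul_avg (R : realType) (I : finType) (B : {set I}) (t : I -> R) :
  #|B|%:R * ((\sum_(v in B) t v) / #|B|%:R) = \sum_(v in B) t v.
Proof.
have [hB|hB] := eqVneq #|B| 0%N.
  move/eqP: hB; rewrite cards_eq0 => /eqP ->; by rewrite big_set0 mul0r mulr0.
 rewrite mulrC divfK //; rewrite pnatr_eq0; exact: hB.
Qed.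

Lemma reduce (R : realType) (n : nat) (x : 'I_n -> R) (p : R) :
  (0 < n)%N -> 1 <= p -> (forall v, 0 <= x v) -> 0 < \sum_v x v ->
  exists k (m b : R), [/\ (1 <= k <= n)%N, 0 <= b <= 1, 1 <= m,
    k%:R * m + (n - k)%:R * b = n%:R &
    (\sum_v Num.max (x v) ((\sum_u x u) / n%:R) `^ p) *
      (k%:R * m `^ p + (n - k)%:R * b `^ p) <=
    (k%:R * m `^ p + (n - k)%:R) * \sum_v x v `^ p].
Proof.
move=> n0 p1 x0 s0.
have p0 : 0 < p by apply: lt_le_trans p1.
set s := \sum_v x v.
have nR0 : 0 < n%:R :> R by rewrite ltr0n.
set A := s / n%:R.
have A0 : 0 < A by apply: divr_gt0.
set T := [set v | A <= x v]%SET.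
set B := ~: T.
have h := cardsC T; rewrite card_ord in h.
have hT : (#|T| <= n)%N by have := leq_addr #|~: T| #|T|; rewrite h.
have cardB : #|B| = (n - #|T|)%N.
  by apply/eqP; rewrite -(eqn_add2l #|T|) subnKC // h.
have inT v : (v \in T) = (A <= x v) by rewrite inE.
have inB v : (v \in B) = (x v < A) by rewrite finset.in_setC inT ltNge.
have kpos : (0 < #|T|)%N.
  rewrite lt0n cards_eq0; apply/negP => /eqP T0.
  have v0 : 'I_n := Ordinal n0.
  have : s < \sum_(v : 'I_n) A.
    rewrite /s (bigD1 v0) //= [X in _ < X](bigD1 v0) //=.
    apply: ltr_leD.
      by rewrite -inB /B T0 finset.setC0 inE.
    apply: ler_sum => v _; apply: ltW; by rewrite -inB /B T0 finset.setC0 inE.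
  rewrite sumr_const card_ord -[A *+ n]mulr_natr /A divfK ?ltxx //; exact: lt0r_neq0.
set k := #|T|.
have kR0 : 0 < k%:R :> R by rewrite ltr0n.
set ST := \sum_(v in T) x v.
set SB := \sum_(v in B) x v.
have hs : s = ST + SB by rewrite /s (sum_splitT T).
set m := (ST / k%:R) / A.
set b := (SB / #|B|%:R) / A.
have ST0 : k%:R * A <= ST.
  have -> : k%:R * A = \sum_(v in T) A by rewrite sumr_const mulr_natl.
  rewrite /ST; apply: ler_sum => v; by rewrite inT.
have SB0 : SB <= #|B|%:R * A.
  have -> : #|B|%:R * A = \sum_(v in B) A by rewrite sumr_const mulr_natl.
  rewrite /SB; apply: ler_sum => v; by rewrite inB => /ltW.
have SBge0 : 0 <= SB by apply: sumr_ge0 => v _.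
have m1 : 1 <= m.
  rewrite /m ler_pdivlMr // mul1r ler_pdivlMr // mulrC //.
have b0 : 0 <= b.
  rewrite /b; apply: divr_ge0; [apply: divr_ge0 => //|exact: ltW].
have b1 : b <= 1.
  rewrite /b ler_pdivrMr // mul1r.
  have [hB|hB] := eqVneq #|B| 0%N.
    by rewrite hB invr0 mulr0 ltW.
  rewrite ler_pdivrMr ?ltr0n ?lt0n // mulrC //.
have hm : ST / k%:R = m * A by rewrite /m divfK // lt0r_neq0.
have hb : SB / #|B|%:R = b * A by rewrite /b divfK // lt0r_neq0.
exists k, m, b; split => //.
- by rewrite kpos hT.
- by rewrite b0 b1.
- have e1 : k%:R * m * A = ST by rewrite -mulrA -hm mulrC divfK // lt0r_neq0.
  have e2 : #|B|%:R * b * A = SB by rewrite -mulrA -hb /SB card_mul_avg.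
  rewrite -cardB; apply: (mulIf (lt0r_neq0 A0)).
  by rewrite mulrDl e1 e2 -hs /A mulrC divfK // lt0r_neq0.
rewrite -cardB.
set Ap := A `^ p.
have Ap0 : 0 < Ap by apply: powR_gt0.
set X := \sum_(v in T) x v `^ p.
set Y := \sum_(v in B) x v `^ p.
have hmax : \sum_v Num.max (x v) A `^ p = X + #|B|%:R * Ap.
  rewrite (sum_splitT T); congr (_ + _).
    apply: eq_bigr => v; rewrite inT => hv; by rewrite max_l.
  rewrite -/B mulr_natl -sumr_const; apply: eq_bigr => v; rewrite inB => hv.
  by rewrite max_r // ltW.
have hx : \sum_v x v `^ p = X + Y by rewrite (sum_splitT T).
have m0 : 0 <= m by apply: le_trans m1.
have hX : k%:R * (m `^ p * Ap) <= X.
  have := @powmean _ _ T x p p1 x0; rewrite -/k -/ST hm powRM //; exact: ltW.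
have hY : #|B|%:R * (b `^ p * Ap) <= Y.
  have := @powmean _ _ B x p p1 x0; rewrite -/SB hb powRM //; exact: ltW.
have hYa : Y <= #|B|%:R * Ap.
  rewrite mulr_natl -sumr_const; apply: ler_sum => v; rewrite inB => hv.
  apply: ge0_ler_powR; [exact: ltW p0|by rewrite nnegrE|by rewrite nnegrE ltW|exact: ltW].
rewrite hmax hx -(ler_pM2r Ap0).
set M := m `^ p; set bp := b `^ p; set c := #|B|%:R; set kk := k%:R.
have M0 : 0 <= M by apply: powR_ge0.
have c0 : 0 <= c by apply: ler0n.
have kk0 : 0 <= kk by apply: ler0n.
set X0 := kk * (M * Ap) in hX *; set Y0 := c * (bp * Ap) in hY *; set a := c * Ap in hYa *.
have X00 : 0 <= X0 by apply: mulr_ge0 => //; apply: mulr_ge0 => //; exact: ltW.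
have a0 : 0 <= a by apply: mulr_ge0 => //; exact: ltW.
have E : (kk * M + c) * (X + Y) * Ap - (X + a) * (kk * M + c * bp) * Ap =
   (a - Y0) * (X - X0) + (X0 + a) * (Y - Y0).
  rewrite /X0 /Y0 /a; ring.
rewrite -subr_ge0 E; apply: addr_ge0; apply: mulr_ge0; rewrite ?subr_ge0 //.
- exact: le_trans hY hYa.
- exact: addr_ge0.
Qed.
Definition Val (R : realType) (n k : nat) (a : R) : R :=
  (k%:R * a `^ (n%:R / k%:R) + a * (n - k)%:R) /
  (k%:R * a `^ (n%:R / k%:R) + (n - k)%:R).

Lemma powRE (R : realType) (a x : R) : 0 < a -> a `^ x = expR (x * ln a).
Proof. by move=> a0; rewrite /powR gt_eqF. Qed.

Lemma ln_le_sub1 (R : realType) (x : R) : 0 < x -> ln x <= x - 1.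
Proof.
move=> x0; have h : ln (1 + (x - 1)) <= x - 1 by apply: le_ln1Dx; lra.
have e : 1 + (x - 1) = x by rewrite addrC subrK.
by rewrite e in h.
Qed.

Lemma ln_ge_1subinv (R : realType) (x : R) : 0 < x -> x * ln x >= x - 1.
Proof.
move=> x0; have xi0 : 0 < x^-1 by rewrite invr_gt0.
have := ln_le_sub1 xi0; rewrite lnV ?posrE // => h.
have := ler_wpM2l (ltW x0) h.
rewrite mulrBr mulfV ?gt_eqF // mulr1 mulrN => h2.
lra.
Qed.

Lemma powR_ge1 (R : realType) (m p : R) : 1 <= m -> 0 <= p -> 1 <= m `^ p.
Proof.
move=> m1 p0; have m0 : 0 < m by apply: lt_le_trans m1.
rewrite powRE //; apply: le_trans (expR_ge1Dx _).
rewrite lerDl; apply: mulr_ge0 => //; exact: ln_ge0.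
Qed.

Lemma La (R : realType) (c x : R) : 1 <= c -> 0 <= x -> x <= c * x.
Proof. move=> c1 x0; have := mulr_ge0 (_ : 0 <= c - 1) x0; rewrite subr_ge0 => /(_ c1); lra. Qed.

Lemma Lb (R : realType) (kR d N S eps Y bp : R) : 1 <= kR -> 1 <= d -> N = kR + d ->
  1 <= S -> 0 < eps -> 0 <= bp -> bp <= 1 -> 0 <= Y -> N <= eps * Y ->
  kR * Y + d <= (S + eps) * (kR * Y + d * bp).
Proof.
move=> kR1 d1 hN S1 e0 bp0 bp1 Y0 hNe.
have hdbp : 0 <= d * bp by apply: mulr_ge0; lra.
have F1 : 0 <= (S - 1) * (kR * Y + d * bp).
  apply: mulr_ge0; first lra.
  apply: addr_ge0 => //; apply: mulr_ge0; lra.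
have F2 : eps * Y <= eps * (kR * Y).
  apply: ler_wpM2l; [lra|]. have : 0 <= (kR - 1) * Y by apply: mulr_ge0; lra.
  lra.
have F3 : 0 <= eps * (d * bp) by apply: mulr_ge0 => //; lra.
lra.
Qed.

Lemma Lc (R : realType) (p eps eta K h N : R) : 0 < p -> 0 < eps -> 0 < K -> 0 <= h -> 0 <= N ->
  2 * K * N ^+ 4 <= p * (eta * eps ^+ 2) -> eta <= 2 * p * K * h ^+ 2 -> N ^+ 2 <= p * h * eps.
Proof.
move=> p0 e0 K0 h0 N0 hp reg2.
have E : 2 * K * (p * h * eps) ^+ 2 = (p * eps ^+ 2) * (2 * p * K * h ^+ 2) by ring.
have pe0 : 0 <= p * eps ^+ 2 by apply: mulr_ge0; [lra|apply: exprn_ge0; lra].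
have A1 : p * (eta * eps ^+ 2) <= 2 * K * (p * h * eps) ^+ 2.
  have e : p * (eta * eps ^+ 2) = p * eps ^+ 2 * eta by ring.
  rewrite E e; by apply: ler_wpM2l.
have A2 : (N ^+ 2) ^+ 2 <= (p * h * eps) ^+ 2.
  rewrite -exprM /=.
  have K0' : 0 < 2 * K by lra.
  rewrite -(ler_pM2l K0'); lra.
rewrite -(ler_pXn2r (isT : (0 < 2)%N)) ?nnegrE //.
  by apply: exprn_ge0; lra.
apply: mulr_ge0; [apply: mulr_ge0|]; lra.
Qed.

Lemma Ld (R : realType) (N p eps h m Y : R) : 0 < N -> 0 < p -> 0 < eps -> 0 <= h ->
  h <= N * (m - 1) -> 1 + p * (m - 1) <= Y -> N ^+ 2 <= p * h * eps -> N <= eps * Y.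
Proof.
move=> N0 p0 e0 h0 mh hYb hph.
have hY' : p * h <= N * Y.
  have H2 := ler_wpM2l (ltW p0) mh.
  have H1 : N * (1 + p * (m - 1)) <= N * Y by apply: ler_wpM2l; lra.
  have e : N * (1 + p * (m - 1)) = N + p * (N * (m - 1)) by ring.
  lra.
rewrite -(ler_pM2l N0); have := ler_wpM2r (ltW e0) hY'.
rewrite expr2 in hph; lra.
Qed.

Lemma Le (R : realType) (p K eta h : R) : 1 <= p -> 18 <= K -> eta <= 1/3 ->
  2 * p * K * h ^+ 2 < eta -> 0 <= h -> h <= 1/2.
Proof.
move=> p1 K18 e13 reg1 h0.
rewrite leNgt; apply/negP => hh.
have h2 : 1/4 < h ^+ 2.
  have : 0 < (h - 1/2) * (h + 1/2) by apply: mulr_gt0; lra.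
  rewrite expr2; lra.
have h3 : 18 * h ^+ 2 <= p * K * h ^+ 2.
  apply: ler_wpM2r; first by apply: exprn_ge0.
  have : 0 <= (p - 1) * K by apply: mulr_ge0; lra.
  lra.
lra.
Qed.

Lemma Lg (R : realType) (kR d N h b m u L K : R) : 1 <= kR -> 1 <= d -> N = kR + d ->
  0 < h -> h <= 1/2 -> b = 1 - h -> 1 <= m -> kR * (m - 1) = d * h ->
  b * u <= h -> m - 1 <= m * L -> K = 2 * N ^+ 2 ->
  d * u - kR * L <= kR * (K * h ^+ 2).
Proof.
move=> kR1 d1 hN h0 hh hb m1 hm i1 i2 hK.
set Q := d * u - kR * L.
have B1 : kR * b * m * Q <= kR * d * h * (m - b).
  have e : kR * b * m * Q = kR * (d * m * (b * u) - kR * b * (m * L)) by rewrite /Q; ring.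
  have e' : kR * d * h * (m - b) = kR * (d * h * (m - b)) by ring.
  rewrite e e'; apply: ler_wpM2l; first lra.
  have dm0 : 0 <= d * m by apply: mulr_ge0; lra.
  have kb0 : 0 <= kR * b by apply: mulr_ge0; lra.
  have H1 := ler_wpM2l dm0 i1; have H2 := ler_wpM2l kb0 i2.
  have e3 : d * h * (m - b) = d * m * h - b * (kR * (m - 1)) by rewrite hm hb; ring.
  have e4 : kR * b * (m - 1) = b * (kR * (m - 1)) by ring.
  rewrite e3; lra.
have B2 : kR * d * h * (m - b) = d * N * h ^+ 2.
  have e4 : kR * (m - b) = N * h.
    have e5 : kR * (m - b) = kR * (m - 1) + kR * h by rewrite hb; ring.
    by rewrite e5 hm hN; ring.
  have e5 : kR * d * h * (m - b) = d * h * (kR * (m - b)) by ring.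
  by rewrite e5 e4 expr2; ring.
have h20 : 0 <= h ^+ 2 by apply: exprn_ge0; lra.
have B3 : d * N * h ^+ 2 <= N ^+ 2 * h ^+ 2.
  apply: ler_wpM2r => //.
  rewrite expr2; apply: ler_wpM2r; lra.
have N20 : 0 <= N ^+ 2 by apply: exprn_ge0; lra.
have KN : 0 <= kR * (K * h ^+ 2).
  apply: mulr_ge0; first lra. rewrite hK; apply: mulr_ge0 => //; apply: mulr_ge0 => //; lra.
have [Qneg|Qpos] := lerP Q 0; first lra.
have kbm : 1/2 <= kR * b * m.
  have hb2 : 1/2 <= b by lra.
  have km : 1 <= kR * m by have := ler_pM ler01 ler01 kR1 m1; rewrite mulr1.
  have : 1/2 * 1 <= b * (kR * m) by apply: ler_pM => //; lra.
  have e : b * (kR * m) = kR * b * m by ring.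
  rewrite e; lra.
have H3 : 1/2 * Q <= kR * b * m * Q by apply: ler_wpM2r; lra.
have H4 : N ^+ 2 * h ^+ 2 <= kR * (N ^+ 2 * h ^+ 2).
  have : 0 <= (kR - 1) * (N ^+ 2 * h ^+ 2) by apply: mulr_ge0; [lra|apply: mulr_ge0].
  lra.
rewrite hK.
have e : kR * (2 * N ^+ 2 * h ^+ 2) = 2 * (kR * (N ^+ 2 * h ^+ 2)) by ring.
rewrite e; lra.
Qed.

Lemma Lh (R : realType) (kR d N S eps eta Pw al Y bp : R) :
  kR * Pw + al * d <= S * (kR * Pw + d) -> Pw <= (1 + eta) * (al * Y) ->
  al * bp = 1 -> 0 < al -> 1 <= S -> S <= N -> eta * N = eps -> 0 < eps -> 0 <= eta ->
  1 <= kR -> 0 <= d -> 0 <= Y -> 0 <= bp ->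
  kR * Y + d <= (S + eps) * (kR * Y + d * bp).
Proof.
move=> hV key hab al0 S1 SN etaN e0 eta0 kR1 d0 Y0 bp0.
rewrite -(ler_pM2l al0).
have G : al * ((S + eps) * (kR * Y + d * bp)) = (S + eps) * (kR * al * Y + d * (al * bp)) by ring.
rewrite G hab mulr1.
set W := kR * al * Y + d.
have W0 : 0 <= W by rewrite /W; apply: addr_ge0 => //; apply: mulr_ge0 => //; apply: mulr_ge0; lra.
have key2 : kR * Pw + d <= (1 + eta) * W.
  have : kR * Pw <= kR * ((1 + eta) * (al * Y)) by apply: ler_wpM2l; lra.
  have : d <= (1 + eta) * d by have := mulr_ge0 eta0 d0; lra.
  have e : (1 + eta) * W = kR * ((1 + eta) * (al * Y)) + (1 + eta) * d by rewrite /W; ring.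
  lra.
have F2 : (S - 1) * (kR * Pw + d) <= (S - 1) * ((1 + eta) * W) by apply: ler_wpM2l; lra.
have F3 : (S - 1) * eta * W <= eps * W.
  apply: ler_wpM2r => //; rewrite -etaN.
  have : (S - 1) * eta <= N * eta by apply: ler_wpM2r; lra.
  lra.
have e : (S - 1) * ((1 + eta) * W) = (S - 1) * W + (S - 1) * eta * W by ring.
have e2 : al * (kR * Y + d) = kR * al * Y + al * d by ring.
rewrite e2; rewrite /W in e F3 F2 *; lra.
Qed.

Lemma Li (R : realType) (kR d N p u m K h eta : R) :
  0 < kR -> N = kR + d -> 0 < p -> 0 < m ->
  d * u - kR * ln m <= kR * (K * h ^+ 2) -> 2 * p * K * h ^+ 2 < eta ->
  eta / 2 <= ln (1 + eta) -> 0 < 1 + eta ->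
  expR (N / kR * (p * u)) <= (1 + eta) * (expR (p * u) * expR (p * ln m)).
Proof.
move=> kR0 hN p0 m0 hQ reg1 i3 eta1.
rewrite -expRD -{1}(lnK (_ : 1 + eta \in Num.pos)) ?posrE // -expRD ler_expR.
have E : N / kR * (p * u) - (ln (1 + eta) + (p * u + p * ln m)) =
   p * (d * u - kR * ln m) / kR - ln (1 + eta).
  rewrite hN; field; exact: lt0r_neq0.
rewrite -subr_le0 E subr_le0.
have : p * (d * u - kR * ln m) / kR <= p * (K * h ^+ 2).
  rewrite ler_pdivrMr // -mulrA [_ * kR]mulrC; apply: ler_wpM2l; lra.
lra.
Qed.


Lemma ln1p_ge (R : realType) (eta : R) : 0 <= eta -> eta <= 1 -> eta / 2 <= ln (1 + eta).
Proof.
move=> e0 e1; have eta1 : 0 < 1 + eta by lra.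
have := ln_ge_1subinv eta1.
have L0 : 0 <= ln (1 + eta) by apply: ln_ge0; lra.
have : 0 <= (1 - eta) * ln (1 + eta) by apply: mulr_ge0; lra.
lra.
Qed.

Lemma Lu (R : realType) (b : R) : 0 < b -> b * (- ln b) <= 1 - b.
Proof. move=> b0; have := ln_ge_1subinv b0; lra. Qed.

Lemma AL_consts (R : realType) (N eps : R) : 3 <= N -> 0 < eps -> eps <= 1 ->
  [/\ 0 < eps / N, eps / N * N = eps, eps / N <= 1/3, 18 <= 2 * N ^+ 2 &
      0 <= 2 * (2 * N ^+ 2) * N ^+ 4 / (eps / N * eps ^+ 2)].
Proof.
move=> N3 e0 e1.
have eta0 : 0 < eps / N by rewrite divr_gt0 //; lra.
split => //.
- by rewrite divfK //; apply: lt0r_neq0; lra.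
- by rewrite ler_pdivrMr; lra.
- nra.
- apply: divr_ge0; last by apply: ltW; apply: mulr_gt0 => //; exact: exprn_gt0.
  apply: mulr_ge0; [nra|apply: exprn_ge0; lra].
Qed.

Lemma AL_hm (R : realType) (kR d N m b : R) : kR * m + d * b = N -> N = kR + d ->
  kR * (m - 1) = d * (1 - b).
Proof. move=> hc hN; rewrite hN in hc; lra. Qed.

Lemma AL_mh (R : realType) (kR d N m h : R) : 1 <= kR -> 1 <= d -> N = kR + d -> 0 <= h ->
  kR * (m - 1) = d * h -> h <= N * (m - 1).
Proof.
move=> kR1 d1 hN hh0 hm.
rewrite -(ler_pM2l (lt_le_trans ltr01 kR1)) mulrCA hm.
have H : kR <= N * d by nra.
have := ler_wpM2r hh0 H; lra.
Qed.

Lemma AL_hp (R : realType) (P p c : R) : P = 1 + c -> P <= p -> 0 < p -> c <= p.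
Proof. move=> -> Pp p0; lra. Qed.

Lemma AL (R : realType) (n : nat) (S : R) : (3 <= n)%N -> 1 <= S -> S <= n%:R ->
  (forall (a : R) k, 1 < a -> (1 <= k <= n)%N -> Val n k a <= S) ->
  forall eps : R, 0 < eps -> eps <= 1 -> exists P : R, 1 <= P /\
  forall p, P <= p -> forall k (m b : R),
   (1 <= k <= n)%N -> 0 <= b <= 1 -> 1 <= m -> k%:R * m + (n - k)%:R * b = n%:R ->
   k%:R * m `^ p + (n - k)%:R <= (S + eps) * (k%:R * m `^ p + (n - k)%:R * b `^ p).
Proof.
move=> n3 S1 SN hV eps e0 e1.
set N : R := n%:R.
have N3 : 3 <= N by rewrite /N ler_nat.
have [eta0 etaeps eta13 K18 q0] := AL_consts N3 e0 e1.
set eta := eps / N in eta0 etaeps eta13 q0.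
set K := 2 * N ^+ 2 in K18 q0.
have Npos : 0 < N := lt_le_trans (ltr0n _ 3) N3.
have den0 : 0 < eta * eps ^+ 2 by apply: mulr_gt0 => //; exact: exprn_gt0.
exists (1 + 2 * K * N ^+ 4 / (eta * eps ^+ 2)); split; first by rewrite lerDl.
move=> p Pp k m b /andP[k1 kn] /andP[b0 b1] m1 hc.
have p1 : 1 <= p by apply: le_trans Pp; rewrite lerDl.
have p0 : 0 < p := lt_le_trans ltr01 p1.
have hp : 2 * K * N ^+ 4 <= p * (eta * eps ^+ 2).
  rewrite -ler_pdivrMr //; exact: (AL_hp (erefl _) Pp p0).
set kR : R := k%:R.
have kR1 : 1 <= kR by rewrite /kR ler1n.
have kR0 : 0 < kR := lt_le_trans ltr01 kR1.
have S1e : 1 <= S + eps by rewrite -[1]addr0 lerD // ltW.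
set Y := m `^ p.
have Y1 : 1 <= Y by apply: powR_ge1 => //; exact: ltW.
have Y0 : 0 <= Y := le_trans ler01 Y1.
have m0 : 0 < m := lt_le_trans ltr01 m1.
set bp := b `^ p.
have bp0 : 0 <= bp by apply: powR_ge0.
have bp1 : bp <= 1.
  apply: (@le_trans _ _ (1 `^ p)); last by rewrite powR1.
  apply: ge0_ler_powR => //; rewrite ?nnegrE //; exact: ltW.
have [kn'|kn'] := eqVneq k n.
  rewrite kn' subnn mulr0n !addr0 !mul0r addr0.
  by apply: La => //; apply: mulr_ge0 => //; exact: ltW.
have kltn : (k < n)%N by rewrite ltn_neqAle kn' kn.
set d : R := (n - k)%:R.
have hd : d = N - kR by rewrite /d natrB.
have d1 : 1 <= d by rewrite /d ler1n subn_gt0.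
have d0 : 0 <= d := le_trans ler01 d1.
have hN : N = kR + d by rewrite hd; ring.
have hm : kR * (m - 1) = d * (1 - b) by apply: AL_hm hc _.
set h := 1 - b in hm.
have hh0 : 0 <= h by rewrite /h subr_ge0.
have mh : h <= N * (m - 1) := AL_mh kR1 d1 hN hh0 hm.
have hYb : 1 + p * (m - 1) <= Y by apply: bern => //; exact: ltW.
have [reg2|reg1] := lerP eta (2 * p * K * h ^+ 2).
  apply: (Lb kR1 d1 hN S1 e0 bp0 bp1 Y0).
  apply: (Ld Npos p0 e0 hh0 mh hYb).
  exact: (Lc p0 e0 (lt_le_trans (ltr0n _ 18) K18) hh0 (ltW Npos) hp reg2).
have hh : h <= 1/2 by apply: (Le p1 K18 eta13 reg1 hh0).
have [h00|hpos] := eqVneq h 0.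
  have b1' : b = 1 by apply/eqP; rewrite -subr_eq0 -oppr_eq0 opprB; apply/eqP.
  have -> : bp = 1 by rewrite /bp b1' powR1.
  rewrite mulr1; apply: La => //; apply: addr_ge0 => //; exact: mulr_ge0 (ltW kR0) Y0.
have hp0 : 0 < h by rewrite lt_neqAle eq_sym hpos hh0.
have bpos : 0 < b by move: hh; rewrite /h; lra.
set u := - ln b.
have u0 : 0 < u.
  rewrite /u oppr_gt0; apply: ln_lt0; rewrite bpos /= -subr_gt0; exact: hp0.
set al := expR (p * u).
have al1 : 1 < al by rewrite /al expR_gt1; apply: mulr_gt0.
have al0 : 0 < al := lt_trans ltr01 al1.
have hbp : al * bp = 1.
  rewrite /bp powRE // /al -expRD.
  have -> : p * u + p * ln b = 0 by rewrite /u; ring.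
  by rewrite expR0.
have hYe : Y = expR (p * ln m) by rewrite /Y powRE.
set Pw := al `^ (N / kR).
have hPw : Pw = expR (N / kR * (p * u)) by rewrite /Pw powRE // /al expRK.
have i1 : b * u <= h := Lu bpos.
have i2 : m - 1 <= m * ln m by apply: ln_ge_1subinv.
have eta1 : 0 < 1 + eta := addr_gt0 ltr01 eta0.
have i3 : eta / 2 <= ln (1 + eta).
  apply: ln1p_ge; first exact: ltW.
  apply: (le_trans eta13); rewrite ler_pdivrMr ?ltr0n // mul1r ler1n //.
have hQ : d * u - kR * ln m <= kR * (K * h ^+ 2).
  apply: (Lg kR1 d1 hN hp0 hh _ m1 hm i1 i2 (erefl _)); rewrite /h; ring.
have key : Pw <= (1 + eta) * (al * Y).
  rewrite hPw hYe /al; exact: (Li kR0 hN p0 m0 hQ reg1 i3 eta1).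
have hV' : kR * Pw + al * d <= S * (kR * Pw + d).
  have kk : (1 <= k <= n)%N by rewrite k1 kn.
  have := hV al k al1 kk.
  rewrite /Val -/kR -/d -/N -/Pw ler_pdivrMr; first by rewrite mulrC.
  apply: (@lt_le_trans _ _ d); first exact: lt_le_trans ltr01 d1.
  rewrite lerDr; apply: mulr_ge0; [exact: ltW|exact: powR_ge0].
exact: (Lh hV' key hbp al0 S1 SN etaeps e0 (ltW eta0) kR1 d0 Y0 bp0).
Qed.

Lemma Val_le_N (R : realType) n k (a : R) : (1 <= k <= n)%N -> 1 < a -> Val n k a <= n%:R.
Proof.
move=> /andP[k1 kn] a1.
rewrite /Val.
set kR : R := k%:R; set N : R := n%:R; set d : R := (n - k)%:R.
have kR1 : 1 <= kR by rewrite /kR ler1n.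
have hN : N = kR + d by rewrite /d natrB // /N /kR; ring.
have d0 : 0 <= d by apply: ler0n.
have r1 : 1 <= N / kR by rewrite ler_pdivlMr ?mul1r; lra.
set Pw := a `^ (N / kR).
have aPw : a <= Pw by apply: le1r_powR => //; exact: ltW.
have den : 0 < kR * Pw + d.
  have : 0 < kR * Pw by apply: mulr_gt0; lra.
  lra.
rewrite ler_pdivrMr //.
have h1 : a * d <= Pw * d by apply: ler_wpM2r.
have h2 : Pw <= kR * Pw by have := mulr_ge0 (_ : 0 <= kR - 1) (_ : 0 <= Pw); lra.
have h3 : N * Pw <= N * (kR * Pw) by apply: ler_wpM2l => //; lra.
have e : N * Pw = kR * Pw + Pw * d by rewrite hN; ring.
have e2 : (kR * Pw + d) * N = N * (kR * Pw) + N * d by ring.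
have h4 : 0 <= N * d by apply: mulr_ge0; lra.
lra.
Qed.

Lemma Val_n (R : realType) n (a : R) : (0 < n)%N -> 0 < a -> Val n n a = 1.
Proof.
move=> n0 a0; rewrite /Val subnn mulr0n mulr0 !addr0.
have nn : n%:R / n%:R = 1 :> R by apply: divff; rewrite pnatr_eq0 -lt0n.
rewrite nn powRr1; last exact: ltW.
apply: divff; apply: mulf_neq0; [by rewrite pnatr_eq0 -lt0n|exact: lt0r_neq0].
Qed.

Lemma Lv (R : realType) (kR d a Q Y bp : R) : 0 < kR -> 0 <= d -> 1 < a -> a * bp = 1 ->
  0 < Y -> Y <= Q -> 0 <= bp ->
  (kR * (a * Q) + a * d) / (kR * (a * Q) + d) <= (kR * Y + d) / (kR * Y + d * bp).
Proof.
move=> kR0 d0 a1 hab Y0 YQ bp0.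
have den1 : 0 < kR * (a * Q) + d.
  have : 0 < kR * (a * Q) by apply: mulr_gt0 => //; apply: mulr_gt0; lra.
  lra.
have den2 : 0 < kR * Y + d * bp.
  have : 0 < kR * Y by apply: mulr_gt0.
  have : 0 <= d * bp by apply: mulr_ge0.
  lra.
rewrite ler_pdivrMr // mulrAC ler_pdivlMr //.
have e : (kR * (a * Q) + a * d) * (kR * Y + d * bp) =
   (kR * Q + d) * (kR * a * Y + d * (a * bp)) by ring.
rewrite e hab mulr1.
have : 0 <= kR * d * (a - 1) * (Q - Y).
  apply: mulr_ge0; last lra.
  apply: mulr_ge0; last lra.
  apply: mulr_ge0; lra.
have e2 : (kR * Y + d) * (kR * (a * Q) + d) - (kR * Q + d) * (kR * a * Y + d) =
   kR * d * (a - 1) * (Q - Y) by ring.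
lra.
Qed.

Lemma sum_ifk (R : realType) n k (x y : R) : (k <= n)%N ->
  \sum_(v < n) (if (v < k)%N then x else y) = k%:R * x + (n - k)%:R * y.
Proof.
move=> kn.
rewrite -(big_mkord xpredT (fun i => if (i < k)%N then x else y)).
rewrite (@big_cat_nat _ _ _ k 0 n _ _ (leq0n k) kn) /=.
rewrite (@eq_big_nat _ 0 +%R 0 k _ (fun _ => x)); last first.
  by move=> i /andP[_ ->].
rewrite (@eq_big_nat _ 0 +%R k n _ (fun _ => y)); last first.
  by move=> i /andP[ki _]; rewrite ltnNge ki.
by rewrite !sumr_const_nat subn0 !mulr_natl.
Qed.

Lemma maxop_ge (R : realType) n (f : 'I_n -> R) v :
  `|f v| <= `|maxop (complete_rel n) f v|.
Proof.
rewrite maxopE [X in _ <= X]ger0_norm; first by rewrite le_max lexx.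
by rewrite le_max normr_ge0.
Qed.

Lemma ratio_ge1 (R : realType) n (f : 'I_n -> R) p : 0 < p -> f <> (fun _ => 0) ->
  1 <= (\sum_v `|maxop (complete_rel n) f v| `^ p) / (\sum_v `|f v| `^ p).
Proof.
move=> p0 hf; rewrite ler_pdivlMr ?mul1r; last exact: sum_pos.
apply: ler_sum => v _; apply: ge0_ler_powR; first exact: ltW.
- by rewrite nnegrE.
- by rewrite nnegrE.
- exact: maxop_ge.
Qed.

Lemma LBw (R : realType) n k (a p : R) : (0 < n)%N -> 0 < p -> 1 < a -> (1 <= k <= n)%N ->
  exists f : 'I_n -> R, f <> (fun _ => 0) /\
   Val n k a <= (\sum_v `|maxop (complete_rel n) f v| `^ p) / (\sum_v `|f v| `^ p).
Proof.
move=> n0 p0 a1 /andP[k1 kn].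
have a0 : 0 < a := lt_trans ltr01 a1.
have [kn'|kn'] := eqVneq k n.
  exists (fun _ => 1); split.
    by move=> /(congr1 (fun g => g (Ordinal n0))) /= /eqP; rewrite oner_eq0.
  rewrite kn' Val_n //; apply: ratio_ge1 => //.
  by move=> /(congr1 (fun g => g (Ordinal n0))) /= /eqP; rewrite oner_eq0.
have kltn : (k < n)%N by rewrite ltn_neqAle kn' kn.
set kR : R := k%:R; set N : R := n%:R; set d : R := (n - k)%:R.
have kR0 : 0 < kR by rewrite /kR ltr0n.
have hN : N = kR + d by rewrite /d natrB // /N /kR; ring.
have d0 : 0 <= d by apply: ler0n.
set c := d / kR.
have c0 : 0 <= c by apply: divr_ge0 => //; exact: ltW.
have kc : kR * c = d by rewrite /c mulrC divfK //; exact: lt0r_neq0.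
have la0 : 0 < ln a by apply: ln_gt0.
set u := ln a / p.
have u0 : 0 < u by apply: divr_gt0.
have pu : p * u = ln a by rewrite /u mulrC divfK //; exact: lt0r_neq0.
set b := expR (- u).
have b0 : 0 < b by apply: expR_gt0.
have b1 : b < 1 by rewrite /b -expR0 ltr_expR oppr_lt0.
have bu : 1 - u <= b by rewrite /b; have := expR_ge1Dx (- u); rewrite addrC.
set m := 1 + c * (1 - b).
have m1 : 1 <= m by rewrite /m lerDl; apply: mulr_ge0 => //; rewrite subr_ge0 ltW.
have m0 : 0 < m := lt_le_trans ltr01 m1.
pose f := fun v : 'I_n => if (v < k)%N then m else b.
have fpos v : 0 < f v by rewrite /f; case: ifP.
exists f; split.
  by move=> /(congr1 (fun g => g (Ordinal n0))) /= => h; have := fpos (Ordinal n0); rewrite h ltxx.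
have hsum : \sum_v `|f v| = N.
  rewrite (eq_bigr (fun v : 'I_n => if (v < k)%N then m else b)); last first.
    by move=> v _; rewrite ger0_norm // ltW.
  rewrite sum_ifk // -/kR -/d /m mulrDr mulr1 mulrA kc hN; ring.
have havg : avg f = 1.
  rewrite /avg hsum -/N mulVf //; apply: lt0r_neq0; rewrite /N ltr0n.
  exact: n0.
have hnum : \sum_v `|maxop (complete_rel n) f v| `^ p = kR * m `^ p + d.
  rewrite (eq_bigr (fun v : 'I_n => if (v < k)%N then m `^ p else 1)); last first.
    move=> v _; rewrite maxopE havg.
    have fv0 := fpos v.
    rewrite (ger0_norm (ltW fv0)) ger0_norm; last by rewrite le_max ler01 orbT.
    rewrite /f; case: ifP => _; first by rewrite max_l.
    by rewrite max_r ?powR1 // ltW.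
  by rewrite sum_ifk // mulr1.
have hden : \sum_v `|f v| `^ p = kR * m `^ p + d * b `^ p.
  rewrite (eq_bigr (fun v : 'I_n => if (v < k)%N then m `^ p else b `^ p)); last first.
    move=> v _; rewrite ger0_norm; last exact: ltW.
    by rewrite /f; case: ifP.
  by rewrite sum_ifk.
rewrite hnum hden.
set Q := expR (c * ln a).
have hPw : a `^ (N / kR) = a * Q.
  rewrite powRE // /Q -{2}(lnK (_ : a \in Num.pos)) ?posrE // -expRD.
  congr expR; rewrite hN /c; field; exact: lt0r_neq0.
have habp : a * b `^ p = 1.
  rewrite powRE // /b expRK mulrN pu expRN lnK ?posrE // mulfV //; exact: lt0r_neq0.
have hY : m `^ p <= Q.
  rewrite powRE // /Q ler_expR.
  have h1 : ln m <= c * u.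
    apply: (le_trans (ln_le_sub1 m0)); rewrite /m addrC addKr.
    apply: ler_wpM2l => //; lra.
  have := ler_wpM2l (ltW p0) h1.
  by rewrite mulrCA pu mulrC.
have : Val n k a = (kR * (a * Q) + a * d) / (kR * (a * Q) + d).
  by rewrite /Val -/kR -/N -/d hPw.
move=> ->; apply: Lv => //.
- exact: powR_gt0.
- exact: powR_ge0.
Qed.

Unset Implicit Arguments.

Lemma upper_ratio (R : realType) n (S eps p : R) :
  (0 < n)%N -> 1 <= p ->
  (forall k (m b : R), (1 <= k <= n)%N -> 0 <= b <= 1 -> 1 <= m ->
     k%:R * m + (n - k)%:R * b = n%:R ->
     k%:R * m `^ p + (n - k)%:R <= (S + eps) * (k%:R * m `^ p + (n - k)%:R * b `^ p)) ->
  forall f : 'I_n -> R, f <> (fun _ => 0) ->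
  (\sum_v `|maxop (complete_rel n) f v| `^ p) <= (S + eps) * (\sum_v `|f v| `^ p).
Proof.
move=> n0 p1 HA f hf.
have p0 : 0 < p := lt_le_trans ltr01 p1.
have spos := sum_pos p hf.
have s1pos : 0 < \sum_v `|f v|.
  have e1 : \sum_v `|f v| `^ 1 = \sum_v `|f v|.
    by apply: eq_bigr => v _; rewrite powRr1.
  by rewrite -e1; apply: sum_pos.
have [k [m [b [kk hb m1 hc H]]]] := reduce n0 p1 (fun v => normr_ge0 (f v)) s1pos.
have := HA k m b kk hb m1 hc => H2.
set D := k%:R * m `^ p + (n - k)%:R * b `^ p in H H2.
have D0 : 0 < D.
  apply: (@lt_le_trans _ _ (k%:R * m `^ p)).
    apply: mulr_gt0; first by rewrite ltr0n; case/andP: kk.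
    apply: powR_gt0; exact: lt_le_trans ltr01 m1.
  by rewrite lerDl; apply: mulr_ge0; [exact: ler0n|exact: powR_ge0].
have e : \sum_v `|maxop (complete_rel n) f v| `^ p =
   \sum_v Num.max `|f v| ((\sum_u `|f u|) / n%:R) `^ p.
  apply: eq_bigr => v _; rewrite maxopE ger0_norm; last by rewrite le_max normr_ge0.
  by rewrite /avg mulrC.
rewrite e -(ler_pM2r D0).
have H3 : (k%:R * m `^ p + (n - k)%:R) * (\sum_v `|f v| `^ p) <=
    (S + eps) * (\sum_v `|f v| `^ p) * D.
  rewrite [X in _ <= X]mulrAC; apply: ler_wpM2r; [exact: ltW spos|exact: H2].
exact: (le_trans H H3).
Qed.

Theorem theorem3p3 (R : realType) (n : nat) (hn : (3 <= n)%N) :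
  (@maxop_norm R _ (complete_rel n) p `^ p) @[p --> +oo%R] -->
    (sup [set x : R | exists (alpha : R) (k : nat),
           [/\ 1 < alpha, (1 <= k <= n)%N &
            x = (k%:R * alpha `^ (n%:R / k%:R) + alpha * (n - k)%:R) /
                (k%:R * alpha `^ (n%:R / k%:R) + (n - k)%:R)]] : R).
Proof.
set E := [set x : R | exists (alpha : R) (k : nat), _].
have n0 : (0 < n)%N by apply: leq_trans hn.
have E1 : E 1.
  exists 2, n; split => //; first by rewrite ltr1n.
  - by rewrite n0 leqnn.
  - by rewrite -/(Val n n 2) Val_n.
have ubE : ubound E n%:R by move=> x [a [k [a1 kk ->]]]; exact: Val_le_N.
have hasE : has_sup E by split; [exists 1|exists n%:R].
set S := sup E.
have S1 : 1 <= S := sup_upper_bound hasE E1.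
have SN : S <= n%:R by apply: ge_sup => //; exists 1.
have hV : forall (a : R) k, 1 < a -> (1 <= k <= n)%N -> Val n k a <= S.
  by move=> a k a1 kk; apply: sup_upper_bound => //; exists a, k.
apply/cvgrPdist_le => eps e0.
set e := Num.min eps 1.
have e0' : 0 < e by rewrite lt_min e0 ltr01.
have e1 : e <= 1 by rewrite ge_min lexx orbT.
have eeps : e <= eps by rewrite ge_min lexx.
have [P [P1 HP]] := AL hn S1 SN hV e0' e1.
exists P; split; first exact: num_real.
move=> p Pp.
have p1 : 1 <= p by apply: le_trans P1 (ltW Pp).
have p0 : 0 < p := lt_le_trans ltr01 p1.
have hup : forall f : 'I_n -> R, f <> (fun _ => 0) ->
    (lpnorm p (maxop (complete_rel n) f) / lpnorm p f) `^ p <= S + e.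
  move=> f hf; rewrite ratio_pow // ler_pdivrMr; last exact: sum_pos.
  exact: (@upper_ratio R n S e p n0 p1 (HP p (ltW Pp)) f hf).
have r0 : forall f : 'I_n -> R, 0 <= lpnorm p (maxop (complete_rel n) f) / lpnorm p f.
  by move=> f; apply: divr_ge0; exact: powR_ge0.
have Se0 : 0 <= S + e by apply: addr_ge0; [exact: le_trans ler01 S1|exact: ltW].
have pinv : p * p^-1 = 1 by apply: mulfV; exact: lt0r_neq0.
rewrite /maxop_norm.
set Qs := [set _ | _ in _].
have hub : ubound Qs ((S + e) `^ p^-1).
  move=> x [f hf <-].
  rewrite -[X in X <= _](@powRr1 _ _ (r0 f)) -pinv powRrM.
  apply: ge0_ler_powR; first by rewrite invr_ge0; exact: ltW.
  - by rewrite nnegrE powR_ge0.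
  - by rewrite nnegrE.
  - exact: hup.
have one0 : (fun _ : 'I_n => (1 : R)) <> (fun _ => 0).
  by move=> /(congr1 (fun g => g (Ordinal n0))) /= /eqP; rewrite oner_eq0.
have Q1 : Qs (lpnorm p (maxop (complete_rel n) (fun _ => 1)) / lpnorm p (fun _ : 'I_n => (1 : R))).
  by exists (fun _ => 1).
have hasQ : has_sup Qs by split; [eexists; exact: Q1|exists ((S + e) `^ p^-1)].
have supQ0 : 0 <= sup Qs := le_trans (r0 _) (sup_upper_bound hasQ Q1).
have U : sup Qs `^ p <= S + e.
  have h1 : sup Qs <= (S + e) `^ p^-1 by apply: ge_sup => //; eexists; exact: Q1.
  have := @ge0_ler_powR _ p (ltW p0) _ _ supQ0 (powR_ge0 _ _) h1.
  by rewrite -powRrM mulVf ?powRr1 //; exact: lt0r_neq0.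
have L : S <= sup Qs `^ p.
  apply: ge_sup; first (exists 1; exact: E1).
  move=> x [a [k [a1 kk ->]]].
  have [f [hf hVf]] := LBw n0 p0 a1 kk.
  apply: (le_trans hVf); rewrite -ratio_pow //.
  apply: ge0_ler_powR; first exact: ltW.
  - rewrite nnegrE; exact: r0.
  - rewrite nnegrE; exact: supQ0.
  apply: sup_upper_bound; first exact: hasQ.
  by exists f.
rewrite distrC ger0_norm; last by rewrite subr_ge0.
lra.
Qed.
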